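(* Let $k \geq \ell \geq 2$ and $n \geq k+\ell$. Let $\mathcal F \subset \binom{[n]}{k}$ and $\mathcal G \subset \binom{[n]}{\ell}$ be non-trivial, shifted and cross-intersecting. Then $$|\mathcal F| + |\mathcal G| \leq \sum_{2 \leq i \leq \ell+1} \binom{\ell+1}{i}\binom{n-\ell-1}{k-i} + \binom{\ell+1}{\ell} =: g(n,k,\ell).$$
   Context: Families are cross-intersecting if every member of one meets every member of the other; a non-empty family is non-trivial if the intersection of all its members is empty. For $r$-sets $A=\{x_1<\dots<x_r\}$, $B=\{y_1<\dots<y_r\}$, $A\prec B$ means $x_i\le y_i$ for all $i$; a family of $r$-sets is shifted (initial) if $A\prec B\in\mathcal F$ implies $A\in\mathcal F$. Binomial coefficients $\binom{a}{b}$ with $b<0$ are $0$. *)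

(* Defs.v *)
From mathcomp Require Import all_boot.
Set Implicit Arguments. Unset Strict Implicit. Unset Printing Implicit Defensive.

(* Ground set [n] = {1..n} is modelled as 'I_n = {0..n-1}; the natural order
   is preserved, so shiftedness is unaffected. *)

Definition sorted_elems (n : nat) (A : {set 'I_n}) : seq nat :=
  sort leq [seq val x | x <- enum A].

Definition shift_le (n : nat) (A B : {set 'I_n}) : bool :=
  (#|A| == #|B|) &&
  [forall i : 'I_#|A|, nth 0 (sorted_elems A) i <= nth 0 (sorted_elems B) i].

Definition uniform (n r : nat) (F : {set {set 'I_n}}) : Prop :=
  forall A, A \in F -> #|A| = r.

Definition shifted (n r : nat) (F : {set {set 'I_n}}) : Prop :=
  forall A B : {set 'I_n}, #|A| = r -> #|B| = r ->
    shift_le A B -> B \in F -> A \in F.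

Definition cross_intersecting (n : nat) (F G : {set {set 'I_n}}) : Prop :=
  forall A B, A \in F -> B \in G -> A :&: B != set0.

Definition non_trivial (n : nat) (F : {set {set 'I_n}}) : Prop :=
  F != set0 /\ \bigcap_(A in F) A = set0.

(* binomial coefficient with integer lower index b = k - i: 0 when k < i *)
Definition binom_diff (a k i : nat) : nat := if i <= k then 'C(a, k - i) else 0.

Definition g (n k l : nat) : nat :=
  \sum_(2 <= i < l.+2) 'C(l.+1, i) * binom_diff (n - l - 1) k i + 'C(l.+1, l).

(* Main.v *)
Require Import Defs.
From mathcomp Require Import all_boot zify.
Set Implicit Arguments. Unset Strict Implicit. Unset Printing Implicit Defensive.

Lemma count_enum_set (T : finType) (A : {set T}) (p : pred T) :
  count p (enum A) = #|A :&: [set x | p x]|.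
Proof.
rewrite -size_filter /enum_mem -filter_predI cardE /enum_mem.
apply: congr1; apply: eq_filter => x /=; rewrite !inE andbC //.
Qed.

Definition pre n (t : nat) : {set 'I_n} := [set x : 'I_n | x < t].

Lemma count_se n (A : {set 'I_n}) s :
  count (fun v => v < s) (sorted_elems A) = #|A :&: pre n s|.
Proof.
rewrite /sorted_elems (permP (permEl (perm_sort leq _))) count_map.
by rewrite count_enum_set.
Qed.

Lemma size_se n (A : {set 'I_n}) : size (sorted_elems A) = #|A|.
Proof. by rewrite /sorted_elems size_sort size_map cardE. Qed.

Lemma sorted_se n (A : {set 'I_n}) : sorted leq (sorted_elems A).
Proof. by rewrite /sorted_elems; apply: sort_sorted; exact: leq_total. Qed.

Lemma shift_le_cnt n (A B : {set 'I_n}) : #|A| = #|B| ->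
  (forall s, #|B :&: pre n s| <= #|A :&: pre n s|) -> shift_le A B.
Proof.
move=> eqAB H; rewrite /shift_le eqAB eqxx /=; apply/forallP => i.
have hiA : (i:nat) < size (sorted_elems A) by rewrite size_se; apply: (leq_trans (ltn_ord i)); rewrite eqAB.
have hiB : (i:nat) < size (sorted_elems B) by rewrite size_se; exact: ltn_ord.

rewrite leqNgt; apply/negP => lt.
move: (H (nth 0 (sorted_elems B) i).+1); rewrite -!count_se.
set sa := sorted_elems A in hiA lt *; set sb := sorted_elems B in hiB lt *.
set b := nth 0 sb i in lt *.
have c1: i.+1 <= count (fun v => v < b.+1) sb.
  rewrite -(cat_take_drop i.+1 sb) count_cat; apply: leq_trans (leq_addr _ _).
  have -> : count (fun v => v < b.+1) (take i.+1 sb) = size (take i.+1 sb).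
    apply/eqP; rewrite -all_count; apply/(all_nthP 0) => j hj.
    rewrite size_takel // in hj.
    rewrite nth_take // ltnS /b.
    apply: (sorted_leq_nth leq_trans leqnn 0 (sorted_se B)) => //.
      by rewrite inE; apply: leq_ltn_trans hiB.
  by rewrite size_takel.
have c2: count (fun v => v < b.+1) sa <= i.
  rewrite -(cat_take_drop i sa) count_cat.
  have -> : count (fun v => v < b.+1) (drop i sa) = 0.
    apply/eqP; rewrite -leqn0 leqNgt -has_count; apply/(has_nthP 0) => -[j hj].
    rewrite size_drop in hj; rewrite nth_drop ltnS => hle.
    have : nth 0 sa i <= nth 0 sa (i + j).
      apply: (sorted_leq_nth leq_trans leqnn 0 (sorted_se A)) => //; rewrite ?inE ?leq_addr //.
      by rewrite -ltn_subRL.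
    move=> h2; move: (leq_trans h2 hle); rewrite leqNgt lt //.
  by rewrite addn0 (leq_trans (count_size _ _)) // size_take; case: ltnP.
move=> c3; move: (leq_trans c1 (leq_trans c3 c2)); by rewrite ltnn.
Qed.

Lemma card_ind n (X : {set 'I_n}) : #|X| = \sum_(i < n) (i \in X).
Proof.
rewrite -sum1_card big_mkcond /=; apply: eq_bigr => i _; by case: (i \in X).
Qed.

Lemma card_pre n t : t <= n -> #|pre n t| = t.
Proof.
move=> htn; rewrite card_ind.
rewrite (eq_bigr (fun i : 'I_n => nat_of_bool (i < t))); last by move=> i _; rewrite inE.
rewrite -(big_mkord xpredT (fun i => nat_of_bool (i < t))).
rewrite (big_cat_nat (leq0n t) htn) /=.
rewrite big_nat_cond (eq_bigr (fun _ => 1)); last by move=> i /andP[/andP[_ ->]].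
rewrite -big_nat_cond sum_nat_const_nat subn0 muln1.
rewrite big_nat_cond big1 ?addn0 // => i /andP[/andP[h _] _]; by rewrite ltnNge h.
Qed.

Lemma sum_eq1 a b m : \sum_(a <= i < b) (m == i : nat) = (a <= m < b).
Proof.
elim: b => [|b IH]; first by rewrite big_geq // ltn0 andbF.
case: (leqP a b) => hab.
  rewrite big_nat_recr //= IH ltnS (leq_eqVlt m b).
  case: (eqVneq m b) => [->|hne] /=; first by rewrite ltnn andbF hab ?addn0 ?add0n.

  by rewrite addn0.
rewrite big_geq //; case: (leqP a m) => //= ham; by rewrite ltnS leqNgt (leq_trans hab ham).
Qed.

Lemma shift_initial n (U A B : {set 'I_n}) m : A = U :&: pre n m ->
  B \subset U -> #|A| = #|B| -> shift_le A B.
Proof.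
move=> eA BU eq; apply: shift_le_cnt => // s; rewrite eA.
case: (leqP s m) => hsm.
  apply: subset_leq_card; apply/subsetP => x; rewrite !inE => /andP[xB xs].
  by rewrite (subsetP BU _ xB) xs (leq_trans xs hsm).
have -> : (U :&: pre n m) :&: pre n s = U :&: pre n m.
  apply/setP => x; rewrite !inE; case: (ltnP x m) => hxm; rewrite ?andbF ?andbT //=.
  by rewrite (ltn_trans hxm hsm) andbT.
by rewrite -eA eq; apply: subset_leq_card; apply: subsetIl.
Qed.

Lemma cardD1' n (X : {set 'I_n}) x : #|X :\ x| = #|X| - (x \in X).
Proof. by rewrite (cardsD1 x X) addKn. Qed.

Lemma shift_remove n (W : {set 'I_n}) (x y : 'I_n) : x <= y -> x \in W -> y \in W ->
  shift_le (W :\ y) (W :\ x).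
Proof.
move=> hxy xW yW; apply: shift_le_cnt; first by rewrite !cardD1' xW yW.
move=> s.
have e : forall z, (W :\ z) :&: pre n s = (W :&: pre n s) :\ z.
  move=> z; apply/setP => w; by rewrite !inE andbA.
rewrite !e !cardD1' !inE xW yW /=.
case: (ltnP y s) => hy; first by rewrite (leq_ltn_trans hxy hy).
by rewrite subn0 leq_subr.
Qed.

Lemma pre_ord0 n r (x : 'I_n) : (x \in pre n r.+1 :\ x) = false.
Proof. by rewrite !inE eqxx. Qed.

Lemma L1 n r (H : {set {set 'I_n}}) : r < n -> uniform r H -> non_trivial H ->
  shifted r H -> forall x : 'I_n, x < r.+1 -> (pre n r.+1 :\ x) \in H.
Proof.
move=> hrn uH [Hne Hcap] sH x hx.
have n0 : 0 < n by apply: leq_ltn_trans hrn.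
pose z := Ordinal n0.
have [B BH zB] : exists2 B, B \in H & z \notin B.
  apply/exists_inP; apply/negP => /exists_inP hB.
  have : z \in \bigcap_(A in H) A.
    apply/bigcapP => A AH; apply/negPn/negP => zA; apply: hB; by exists A.
  by rewrite Hcap inE.
have hz : z \in pre n r.+1 by rewrite inE.
have cpre : #|pre n r.+1| = r.+1 by rewrite card_pre.
have S0H : (pre n r.+1 :\ z) \in H.
  have c0 : #|pre n r.+1 :\ z| = r by rewrite cardD1' hz cpre subn1.
  apply: (sH _ B c0 (uH _ BH) _ BH).
  apply: (shift_initial (U := ~: [set z]) (m := r.+1)).
    by apply/setP => y; rewrite !inE andbC.
    by apply/subsetP => y yB; rewrite !inE; apply/eqP => e; move: zB; rewrite -e yB.
  by rewrite c0 (uH _ BH).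
have xp : x \in pre n r.+1 by rewrite inE.
apply: (sH _ _ _ _ _ S0H).
- by rewrite cardD1' xp cpre subn1.
- by rewrite cardD1' hz cpre subn1.
- by apply: shift_remove.
Qed.

Lemma L2 n r (H : {set {set 'I_n}}) (Y : {set 'I_n}) : r < n ->
  (forall x : 'I_n, x < r.+1 -> (pre n r.+1 :\ x) \in H) ->
  (forall Z, Z \in H -> Y :&: Z != set0) -> 2 <= #|Y :&: pre n r.+1|.
Proof.
move=> hrn hH hY; rewrite leqNgt; apply/negP; rewrite ltnS => h1.
have n0 : 0 < n by apply: leq_ltn_trans hrn.
have [x [hx hsub]] : exists x : 'I_n, x < r.+1 /\ Y :&: pre n r.+1 \subset [set x].
  case: (posnP #|Y :&: pre n r.+1|) => h0.
    exists (Ordinal n0); split => //; move/eqP: h0; rewrite cards_eq0 => /eqP ->.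
    exact: sub0set.
  have /cards1P [x ex] : #|Y :&: pre n r.+1| == 1 by rewrite eqn_leq h1 h0.
  exists x; split; last by rewrite ex.
  have hxin : x \in Y :&: pre n r.+1 by rewrite ex set11.
  by move: hxin; rewrite !inE => /andP[].
move: (hY _ (hH x hx)); apply/negP; rewrite negbK; apply/eqP/setP => y.
rewrite !inE; apply/negP => /and3P[yY ynx yp].
have : y \in [set x] by apply: (subsetP hsub); rewrite !inE yY yp.
by rewrite inE (negbTE ynx).
Qed.

Definition Dt n (B : {set 'I_n}) t : {set 'I_n} := (B :\: pre n t) :|: (pre n t :\: B).

Lemma in_Dt n (B : {set 'I_n}) t i : (i \in Dt B t) = (i \in B) (+) (i < t).
Proof. by rewrite !inE; case: (i \in B); case: (i < t). Qed.

Lemma card_Dt_S n (B : {set 'I_n}) t : #|Dt B t.+1| <= (#|Dt B t|).+1.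
Proof.
have sub : Dt B t.+1 \subset Dt B t :|: [set i : 'I_n | val i == t].
  apply/subsetP => i; rewrite in_setU !in_Dt inE ltnS leq_eqVlt.
  by case: (val i == t); case: (i \in B); case: (i < t).
apply: (leq_trans (subset_leq_card sub)); rewrite -addn1.
apply: (leq_trans (leq_card_setU _ _)); rewrite leq_add2l.
apply/card_le1_eqP => x y; rewrite !inE => /eqP hx /eqP hy; apply: val_inj; by rewrite hx hy.
Qed.

Lemma ivt (f : nat -> nat) a b k : (forall i, f i.+1 <= (f i).+1) -> a <= b ->
  f a <= k -> k <= f b -> exists2 i, a <= i <= b & f i = k.
Proof.
move=> hf hab ha; elim: b hab => [|b IH] hab hb.
  rewrite leqn0 in hab; move/eqP: hab => hab; subst a.
  by exists 0 => //; apply/eqP; rewrite eqn_leq ha hb.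
case: (eqVneq (f b.+1) k) => [e|ne]; first by exists b.+1; rewrite ?leqnn ?hab.
have hlt : k < f b.+1 by rewrite ltn_neqAle eq_sym ne hb.
case: (leqP a b) => hab'.
  have [i hi fi] := IH hab' (leq_trans (hlt : k.+1 <= f b.+1) (hf b)).
  by exists i => //; case/andP: hi => -> /= ?; apply: leqW.
have eab : a = b.+1 by apply/eqP; rewrite eqn_leq hab hab'.
by move: (leq_ltn_trans ha hlt); rewrite eab ltnn.
Qed.

Lemma Dt0 n (B : {set 'I_n}) : Dt B 0 = B.
Proof. by apply/setP => i; rewrite in_Dt ltn0 addbF. Qed.

Lemma Dtn n (B : {set 'I_n}) : Dt B n = ~: B.
Proof. by apply/setP => i; rewrite in_Dt ltn_ord addbT inE. Qed.

Definition tt n k (B : {set 'I_n}) : nat := \max_(t < n.+1 | #|Dt B t| == k) t.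

Lemma tt_spec n k (B : {set 'I_n}) : #|B| <= k -> k <= n - #|B| ->
  [/\ tt k B <= n, #|Dt B (tt k B)| = k &
      forall s, s <= n -> #|Dt B s| = k -> s <= tt k B].
Proof.
move=> h1 h2.
have [t0 ht0 ft0] : exists2 t, 0 <= t <= n & #|Dt B t| = k.
  apply: ivt => //; first exact: card_Dt_S.
    by rewrite Dt0.
  by rewrite Dtn cardsCs setCK card_ord.
have pos : 0 < #|[pred t : 'I_n.+1 | #|Dt B t| == k]|.
  apply/card_gt0P; exists (Ordinal (ht0 : t0 < n.+1)); by rewrite inE /= ft0.
have [i0 hi0 e] := eq_bigmax_cond (fun t : 'I_n.+1 => nat_of_ord t) pos.
rewrite /tt e; split.
- by rewrite -ltnS ltn_ord.
- by move: hi0; rewrite inE => /eqP.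
- move=> s hs fs; rewrite -e.
  apply: (@leq_bigmax_cond _ _ (fun t : 'I_n.+1 => nat_of_ord t) (Ordinal (hs : s < n.+1))).
  by rewrite inE /= fs.
Qed.

Lemma ballot n k (B : {set 'I_n}) t :
  #|Dt B t| = k -> (forall s, t <= s -> k <= #|Dt B s|) ->
  forall s, #|B :&: pre n s| <= #|~: Dt B t :&: pre n s|.
Proof.
move=> hk hb s; case: (leqP t s) => hts.
  have id : #|B :&: pre n s| + #|Dt B s| = #|~: Dt B t :&: pre n s| + #|Dt B t|.
    rewrite !card_ind -!big_split; apply: eq_bigr => i _ /=.
    rewrite !in_setI !in_setC !in_Dt !inE.
    have : (i < t) ==> (i < s) by apply/implyP => h; apply: leq_trans h hts.
    by case: (i \in B); case: (i < t); case: (i < s).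
  move: (hb s hts); rewrite hk in id; lia.
apply: subset_leq_card; apply/subsetP => i; rewrite !in_setI !in_setC !in_Dt !inE.
have : (i < s) ==> (i < t) by apply/implyP => h; apply: ltn_trans h hts.
by case: (i \in B); case: (i < t); case: (i < s).
Qed.

Lemma Dt_inj_eq n (B1 B2 : {set 'I_n}) t : Dt B1 t = Dt B2 t -> B1 = B2.
Proof.
move/setP => e; apply/setP => i; move: (e i); rewrite !in_Dt.
by case: (i \in B1); case: (i \in B2); case: (i < t).
Qed.

Lemma Dt_inj_lt n (B1 B2 : {set 'I_n}) t1 t2 : t1 <= t2 -> #|B1| = #|B2| ->
  Dt B1 t1 = Dt B2 t2 -> #|Dt B1 t2| = #|Dt B1 t1|.
Proof.
move=> h12 hc /setP e.
have id : #|Dt B1 t2| + #|B1| = #|Dt B1 t1| + #|B2|.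
  rewrite !card_ind -!big_split; apply: eq_bigr => i _ /=.
  move: (e i); rewrite !in_Dt.
  have : (i < t1) ==> (i < t2) by apply/implyP => h; apply: leq_trans h h12.
  by case: (i \in B1); case: (i \in B2); case: (i < t1); case: (i < t2).
move: id; rewrite hc; lia.
Qed.

Lemma cardI_preS n (X : {set 'I_n}) s (hs : s < n) :
  #|X :&: pre n s.+1| = #|X :&: pre n s| + (Ordinal hs \in X).
Proof.
set o := Ordinal hs.
rewrite !card_ind (bigD1 o) //= (bigD1 o (P := xpredT)) //= !inE ltnn ltnSn andbT andbF add0n.
rewrite addnC; congr (_ + _); apply: eq_bigr => i hi; rewrite !inE ltnS leq_eqVlt.
have -> : (val i == s) = false by apply/negbTE; apply: contra hi => /eqP h; apply/eqP/val_inj.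
by [].
Qed.

Lemma cardI_pre_ge n (X : {set 'I_n}) s : n <= s -> X :&: pre n s.+1 = X :&: pre n s.
Proof.
move=> hs; apply/setP => i; rewrite !inE.
by rewrite (leq_trans (ltn_ord i) hs) (ltn_trans (ltn_ord i) (leq_ltn_trans hs (ltnSn s))).
Qed.

Definition Lsm n (C : {set 'I_n}) m : {set 'I_n} :=
  [set x in C | #|C :&: pre n x.+1| <= m].

Lemma Lsm_card n (C : {set 'I_n}) m s :
  #|Lsm C m :&: pre n s| = minn m #|C :&: pre n s|.
Proof.
elim: s => [|s IH].
  have e : forall X : {set 'I_n}, X :&: pre n 0 = set0.
    by move=> X; apply/setP => i; rewrite !inE ltn0 andbF.
  by rewrite !e cards0 minn0.
case: (ltnP s n) => hs; last by rewrite !cardI_pre_ge.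
rewrite !cardI_preS IH /Lsm inE /= cardI_preS.
case: (Ordinal hs \in C) => /=; lia.
Qed.

Lemma Lsm_sub n (C : {set 'I_n}) m : Lsm C m \subset C.
Proof. by apply/subsetP => x; rewrite inE => /andP[]. Qed.

Lemma pre_all n (X : {set 'I_n}) : X :&: pre n n = X.
Proof. by apply/setP => i; rewrite !inE ltn_ord andbT. Qed.

Lemma Dt_ge n (B : {set 'I_n}) s : n <= s -> Dt B s = Dt B n.
Proof.
move=> hs; apply/setP => i; rewrite !in_Dt ltn_ord.
by rewrite (leq_trans (ltn_ord i) hs).
Qed.

Lemma ballot_tt n k (B : {set 'I_n}) : #|B| <= k -> k <= n - #|B| ->
  forall s, tt k B <= s -> k <= #|Dt B s|.
Proof.
move=> h1 h2; have [ht hk hmax] := tt_spec h1 h2.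
move=> s hs; case: (leqP s n) => hsn; last first.
  rewrite Dt_ge ?(ltnW hsn) //; rewrite Dtn cardsCs setCK card_ord; lia.
rewrite leqNgt; apply/negP => hlt.
have hkn : k <= #|Dt B n| by rewrite Dtn cardsCs setCK card_ord.
have [s' hs' fs'] := @ivt (fun s => #|Dt B s|) s n k (card_Dt_S B) hsn (ltnW hlt) hkn.
case/andP: hs' => h3 h4.
have := hmax s' h4 fs'; move=> h5.
have e : s' = s by apply/eqP; rewrite eqn_leq h3 (leq_trans h5 hs).
by move: hlt; rewrite -e fs' ltnn.
Qed.

Lemma avoid n k l (B : {set 'I_n}) : #|B| = l -> l <= k -> k + l <= n ->
  exists B'' : {set 'I_n}, [/\ #|B''| = l, shift_le B'' B & B'' :&: Dt B (tt k B) = set0].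
Proof.
move=> hB hlk hn.
have h1 : #|B| <= k by rewrite hB.
have h2 : k <= n - #|B| by rewrite hB; lia.
have [ht hk hmax] := tt_spec h1 h2.
have hb := ballot_tt h1 h2.
set t := tt k B in ht hk hmax hb *.
set C := ~: Dt B t.
have cC : #|C| = n - k by rewrite cardsCs setCK card_ord hk.
have cL : #|Lsm C l| = l.
  by rewrite -(pre_all (Lsm C l)) Lsm_card pre_all cC; lia.
exists (Lsm C l); split => //.
- apply: shift_le_cnt; first by rewrite cL hB.
  move=> s; rewrite Lsm_card leq_min; apply/andP; split.
    by rewrite -hB; apply: subset_leq_card; apply: subsetIl.
  exact: (ballot hk hb).
- apply/setP => i; rewrite !inE; apply/negP => /andP[hi hA].
  by rewrite hA in hi.
Qed.

Lemma P4 n k l (B : {set 'I_n}) t : #|B| = l -> l <= k -> k < n ->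
  #|Dt B t| = k -> 2 <= #|B :&: pre n k.+1| -> ~~ (B \subset pre n l.+1) ->
  2 <= #|Dt B t :&: pre n l.+1|.
Proof.
move=> hB hlk hkn hk h2 hsub.
have cT : #|pre n l.+1| = l.+1 by rewrite card_pre //; lia.
have cR : #|pre n k.+1| = k.+1 by rewrite card_pre.
case: (leqP t l.+1) => htl.
  have id1 : #|Dt B t :&: pre n l.+1| + #|B| = #|Dt B t| + #|B :&: pre n l.+1|.
    rewrite !card_ind -!big_split; apply: eq_bigr => i _ /=.
    rewrite !in_setI !in_Dt !inE.
    have : (i < t) ==> (i < l.+1) by apply/implyP => h; apply: leq_trans h htl.
    by case: (i \in B); case: (i < t); case: (i < l.+1).
  have id2 : #|B :&: pre n k.+1| + #|pre n l.+1| <= #|B :&: pre n l.+1| + #|pre n k.+1|.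
    rewrite !card_ind -!big_split; apply: leq_sum => i _ /=.
    rewrite !in_setI !inE.
    have : (i < l.+1) ==> (i < k.+1) by apply/implyP => h; apply: leq_trans h _; rewrite ltnS.
    by case: (i \in B); case: (i < k.+1); case: (i < l.+1).
  move: id1 id2; rewrite cT cR hB hk; lia.
have id1 : #|Dt B t :&: pre n l.+1| + #|B :&: pre n l.+1| = #|pre n l.+1|.
  rewrite !card_ind -!big_split; apply: eq_bigr => i _ /=.
  rewrite !in_setI !in_Dt !inE.
  have : (i < l.+1) ==> (i < t) by apply/implyP => h; apply: ltn_trans h htl.
  by case: (i \in B); case: (i < t); case: (i < l.+1).
have hle : #|B :&: pre n l.+1| <= #|B| by apply/subset_leq_card/subsetIl.
have hne : #|B :&: pre n l.+1| != #|B|.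
  apply/negP => /eqP e; move: hsub; apply/negP; rewrite negbK.
  have : B :&: pre n l.+1 == B by rewrite eqEcard subsetIl e leqnn.
  by move/eqP => <-; apply: subsetIr.
have hlt : #|B :&: pre n l.+1| < l by move: hle hne; rewrite hB; lia.
move: id1 hlt; rewrite cT; lia.
Qed.

Lemma A_inj n k l (B1 B2 : {set 'I_n}) : #|B1| = l -> #|B2| = l -> l <= k -> k + l <= n ->
  Dt B1 (tt k B1) = Dt B2 (tt k B2) -> B1 = B2.
Proof.
move=> h1 h2 hlk hn e.
have a1 : #|B1| <= k by rewrite h1.
have b1 : k <= n - #|B1| by rewrite h1; lia.
have a2 : #|B2| <= k by rewrite h2.
have b2 : k <= n - #|B2| by rewrite h2; lia.
have [ht1 hk1 hm1] := tt_spec a1 b1.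
have [ht2 hk2 hm2] := tt_spec a2 b2.
case: (ltngtP (tt k B1) (tt k B2)) => hc.
- have := Dt_inj_lt (ltnW hc) (etrans h1 (esym h2)) e; rewrite hk1 => h.
  by move: (hm1 _ ht2 h); rewrite leqNgt hc.
- have := Dt_inj_lt (ltnW hc) (etrans h2 (esym h1)) (esym e); rewrite hk2 => h.
  by move: (hm2 _ ht1 h); rewrite leqNgt hc.
- by move: e; rewrite hc; apply: Dt_inj_eq.
Qed.

Lemma card_indT (T : finType) (X : {set T}) : #|X| = \sum_(x : T) (x \in X).
Proof.
rewrite -sum1_card big_mkcond /=; apply: eq_bigr => i _; by case: (i \in X).
Qed.

Lemma F0i_card n k l i : l.+1 <= n ->
  #|[set A : {set 'I_n} | (#|A| == k) && (#|A :&: pre n l.+1| == i)]|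
    <= 'C(l.+1, i) * binom_diff (n - l - 1) k i.
Proof.
move=> hln; set T := pre n l.+1.
have cT : #|T| = l.+1 by rewrite card_pre.
rewrite /binom_diff; case: (leqP i k) => hik; last first.
  rewrite muln0 leqn0 cards_eq0; apply/eqP/setP => A; rewrite !inE.
  apply/negP => /andP[/eqP hA /eqP hAT].
  have : #|A :&: T| <= #|A| by apply/subset_leq_card/subsetIl.
  by rewrite hA hAT leqNgt hik.
set Fi := [set A : {set 'I_n} | _].
pose f (A : {set 'I_n}) := (A :&: T, A :\: T).
have finj : {in Fi &, injective f}.
  move=> A1 A2 _ _ [e1 e2]; apply/setP => x.
  move/setP: e1 => /(_ x); move/setP: e2 => /(_ x); rewrite !inE.
  by case: (x < l.+1); case: (x \in A1); case: (x \in A2).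
rewrite -(card_in_imset finj).
set S1 := [set S : {set 'I_n} | S \subset T & #|S| == i].
set S2 := [set R : {set 'I_n} | R \subset ~: T & #|R| == k - i].
have sub : f @: Fi \subset setX S1 S2.
  apply/subsetP => p /imsetP [A]; rewrite inE => /andP[/eqP hA /eqP hAT] ->.
  rewrite !inE /= hAT eqxx subsetIr /=.
  have := cardsID T A; rewrite hA hAT => e.
  have -> : #|A :\: T| = k - i by lia.
  rewrite eqxx andbT; apply/subsetP => x; rewrite !inE => /andP[]; by [].
apply: (leq_trans (subset_leq_card sub)); rewrite cardsX !cards_draws cT.
have -> : #|~: T| = n - l - 1 by rewrite cardsCs setCK card_ord cT; lia.
by [].
Qed.

Lemma F0_card n k l : l.+1 <= n ->
  #|[set A : {set 'I_n} | (#|A| == k) && (2 <= #|A :&: pre n l.+1|)]|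
    <= \sum_(2 <= i < l.+2) 'C(l.+1, i) * binom_diff (n - l - 1) k i.
Proof.
move=> hln; set T := pre n l.+1.
have cT : #|T| = l.+1 by rewrite card_pre.
set F0 := [set A : {set 'I_n} | _].
apply: (@leq_trans (\sum_(2 <= i < l.+2)
   #|[set A : {set 'I_n} | (#|A| == k) && (#|A :&: pre n l.+1| == i)]|)); last first.
  by apply: leq_sum => i _; apply: F0i_card.
rewrite -sum1_card.
rewrite (eq_bigr (fun A => \sum_(2 <= i < l.+2) (#|A :&: T| == i : nat))); last first.
  move=> A; rewrite inE => /andP[_ h2].
  rewrite (eq_bigr (fun i => (#|A :&: T| == i : nat))) ?sum_eq1 ?h2 //=.
  have hh : #|A :&: T| <= #|T| by apply: subset_leq_card; apply: subsetIr.
  by rewrite ltnS -cT hh.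
rewrite exchange_big /=; apply: leq_sum => i _.
rewrite card_indT big_mkcond /=; apply: leq_sum => A _.
rewrite !inE; case: (#|A| == k); case: (2 <= #|A :&: T|) => //=.
Qed.

Theorem theorem3p3 (n k l : nat) (F G : {set {set 'I_n}}) :
  2 <= l -> l <= k -> k + l <= n ->
  uniform k F -> uniform l G ->
  non_trivial F -> non_trivial G ->
  shifted k F -> shifted l G ->
  cross_intersecting F G ->
  #|F| + #|G| <= g n k l.
Proof.
move=> hl hlk hn uF uG ntF ntG sF sG cr.
have hln : l < n by lia.
have hkn : k < n by lia.
set T := pre n l.+1.
have hG1 := L1 hln uG ntG sG.
have hF1 := L1 hkn uF ntF sF.
set F0 := [set A : {set 'I_n} | (#|A| == k) && (2 <= #|A :&: pre n l.+1|)].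
have FF0 : F \subset F0.
  apply/subsetP => A AF; rewrite inE (uF _ AF) eqxx /=.
  apply: (L2 hln hG1) => Z ZG; exact: cr.
have hB2 : forall B, B \in G -> 2 <= #|B :&: pre n k.+1|.
  move=> B BG; apply: (L2 hkn hF1) => Z ZF; rewrite setIC; exact: cr.
set P := [set S : {set 'I_n} | S \subset T].
have cG : #|G :&: P| + #|G :\: P| = #|G| by apply: cardsID.
have cGin : #|G :&: P| <= 'C(l.+1, l).
  have -> : 'C(l.+1, l) = #|[set S : {set 'I_n} | S \subset T & #|S| == l]|.
    by rewrite cards_draws card_pre.
  apply: subset_leq_card; apply/subsetP => S; rewrite !inE => /andP[SG ST].
  by rewrite ST (uG _ SG) eqxx.
pose phi (B : {set 'I_n}) := Dt B (tt k B).
have phinj : {in G :\: P &, injective phi}.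
  move=> B1 B2; rewrite !inE => /andP[_ h1] /andP[_ h2] e.
  exact: (A_inj (uG _ h1) (uG _ h2) hlk hn e).
have phisub : phi @: (G :\: P) \subset F0 :\: F.
  apply/subsetP => A /imsetP [B]; rewrite !inE => /andP[nBT BG] ->.
  have hB := uG _ BG.
  have a1 : #|B| <= k by rewrite hB.
  have b1 : k <= n - #|B| by rewrite hB; lia.
  have [ht hk _] := tt_spec a1 b1.
  apply/and3P; split.
  - apply/negP => hF.
    have [B'' [c'' sh dis]] := avoid hB hlk hn.
    have B''G : B'' \in G by apply: (sG B'' B) => //.
    move: (cr _ _ hF B''G); rewrite setIC /phi dis; by rewrite eqxx.
  - by rewrite hk.
  - exact: (P4 hB hlk hkn hk (hB2 _ BG) nBT).
have c1 : #|G :\: P| <= #|F0 :\: F|.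
  by rewrite -(card_in_imset phinj); apply: subset_leq_card.
have c2 : #|F0 :&: F| + #|F0 :\: F| = #|F0| by apply: cardsID.
have e3 : F0 :&: F = F by apply/setIidPr.
have c4 := F0_card k hln.
rewrite /g; move: c1 c2 c4 cG cGin; rewrite e3.
move: (\sum_(2 <= i < l.+2) _) ('C(l.+1, l)) #|F| #|G| #|F0| #|F0 :\: F| #|G :\: P| #|G :&: P| => *; lia.
Qed.
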